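(* Let $\mathbf{u}$ be an $m$-dimensional unit vector with entries in $\mathcal{R}_{12}$ such that $\mathrm{lde}(\mathbf{u})=0$. Then for any $0\le j\le m-1$ there exists a sequence $G_1,\ldots,G_q$ of one-level operators of type $\zeta_{12}$ and two-level operators of type $X$ and $H'$ such that $G_1\cdots G_q\mathbf{u}=\mathbf{e}_j$.
   Context: $\zeta_{12}=e^{2\pi i/12}$, $\mathcal{R}_{12}$ is the smallest subring of $\mathbb{C}$ containing $1/2$ and $\zeta_{12}$, and $\mathbb{Z}[\zeta_{12}]$ the smallest subring containing $\zeta_{12}$. Let $\delta=1+i$. For a vector $\mathbf{u}$ over $\mathcal{R}_{12}$, $\mathrm{lde}(\mathbf{u})$ is the smallest $\ell\in\mathbb{N}$ such that $\delta^\ell\mathbf{u}$ has all entries in $\mathbb{Z}[\zeta_{12}]$. $\mathbf{e}_j$ is the $j$-th standard basis vector. $X=\begin{bmatrix}0&1\\1&0\end{bmatrix}$, $H'=\frac{1+i}{2}\begin{bmatrix}1&1\\1&-1\end{bmatrix}$. The one-level operator $c_{[j]}$ of type $c$ is the $m\times m$ identity with $(j,j)$ entry replaced by $c$; the two-level operator $M_{[j,j']}$ ($j<j'$) of type $M\in\mathrm{M}_2(\mathbb{C})$ is the $m\times m$ identity with entries at $(j,j),(j,j'),(j',j),(j',j')$ replaced by $M_{1,1},M_{1,2},M_{2,1},M_{2,2}$. *)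

(* Defs.v *)
From HB Require Import structures.
From mathcomp Require Import all_boot all_order all_algebra all_field.
Set Implicit Arguments. Unset Strict Implicit. Unset Printing Implicit Defensive.
Import Order.TTheory GRing.Theory Num.Theory.
Local Open Scope ring_scope.

(* zeta_12 = e^{2 pi i/12} = (sqrt 3 + i)/2 *)
Definition zeta12 : algC := (sqrtC 3%:R + 'i) / 2%:R.

Inductive inR12 : algC -> Prop :=
| R12_one : inR12 1
| R12_half : inR12 (2%:R)^-1
| R12_zeta : inR12 zeta12
| R12_add x y : inR12 x -> inR12 y -> inR12 (x + y)
| R12_opp x : inR12 x -> inR12 (- x)
| R12_mul x y : inR12 x -> inR12 y -> inR12 (x * y).

Inductive inZ12 : algC -> Prop :=
| Z12_one : inZ12 1
| Z12_zeta : inZ12 zeta12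
| Z12_add x y : inZ12 x -> inZ12 y -> inZ12 (x + y)
| Z12_opp x : inZ12 x -> inZ12 (- x)
| Z12_mul x y : inZ12 x -> inZ12 y -> inZ12 (x * y).

Definition delta : algC := 1 + 'i.

Definition is_lde (m : nat) (u : 'cV[algC]_m) (l : nat) : Prop :=
  (forall i, inZ12 (delta ^+ l * u i 0)) /\
  (forall l', (forall i, inZ12 (delta ^+ l' * u i 0)) -> (l <= l')%N).

Definition unit_vector (m : nat) (u : 'cV[algC]_m) : Prop :=
  \sum_(i < m) `|u i 0| ^+ 2 = 1.

Definition Xmx : 'M[algC]_2 := \matrix_(a < 2, b < 2) (a != b)%:R.
Definition Hpmx : 'M[algC]_2 :=
  \matrix_(a < 2, b < 2) ((1 + 'i) / 2%:R * (if (a == 1) && (b == 1) then -1 else 1)).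

Definition onelevel (m : nat) (c : algC) (j : 'I_m) : 'M[algC]_m :=
  \matrix_(a, b) (if (a == j) && (b == j) then c else (a == b)%:R).

Definition twolevel (m : nat) (M : 'M[algC]_2) (j j' : 'I_m) : 'M[algC]_m :=
  \matrix_(a, b)
    (if (a == j) && (b == j) then M 0 0
     else if (a == j) && (b == j') then M 0 1
     else if (a == j') && (b == j) then M 1 0
     else if (a == j') && (b == j') then M 1 1
     else (a == b)%:R).

Definition allowed_gate (m : nat) (G : 'M[algC]_m) : Prop :=
  (exists j : 'I_m, G = onelevel zeta12 j) \/
  (exists j j' : 'I_m, (j < j')%N /\ (G = twolevel Xmx j j' \/ G = twolevel Hpmx j j')).

(* G_1 ... G_q applied to u, for s = [:: G_1; ...; G_q] *)
Definition apply_seq (m : nat) (s : seq 'M[algC]_m) (u : 'cV[algC]_m) : 'cV[algC]_m :=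
  foldr (fun G v => G *m v) u s.

(* Main.v *)
Require Import Defs.
From mathcomp Require Import all_boot all_order all_algebra all_field.
From mathcomp Require Import ring lra zify.
Import Order.TTheory GRing.Theory Num.Theory.
Local Open Scope ring_scope.
Local Notation s3 := (sqrtC (3%:R : algC)).


Lemma s3sq : s3 ^+ 2 = 3%:R. Proof. exact: sqrtCK. Qed.

Lemma two_neq0 : (2%:R : algC) != 0. Proof. by rewrite pnatr_eq0. Qed.

Lemma zeta2 : zeta12 ^+ 2 = (1 + s3 * 'i) / 2%:R.
Proof.
have E : zeta12 ^+ 2 = (1 + s3 * 'i) / 2%:R + ((s3 ^+ 2 - 3%:R) + ('i ^+ 2 + 1)) / 4%:R.
  rewrite /zeta12; field; by rewrite ?two_neq0 ?pnatr_eq0.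
by rewrite E s3sq sqrCi !subrr addNr addr0 mul0r addr0.
Qed.

Lemma zeta3 : zeta12 ^+ 3 = 'i.
Proof.
have E : zeta12 ^+ 3 = 'i + ((s3 ^+ 2 - 3%:R) * (s3 + 3%:R * 'i) + ('i ^+ 2 + 1) * (3%:R * s3 + 'i)) / 8%:R.
  rewrite /zeta12; field; by rewrite ?two_neq0 ?pnatr_eq0.
by rewrite E s3sq sqrCi !subrr addNr !mul0r addr0 mul0r addr0.
Qed.

Lemma zeta4 : zeta12 ^+ 4 = zeta12 ^+ 2 - 1.
Proof.
have -> : zeta12 ^+ 4 = (zeta12 ^+ 2) ^+ 2 by rewrite -exprM.
rewrite zeta2.
have E : ((1 + s3 * 'i) / 2%:R) ^+ 2 = (1 + s3 * 'i) / 2%:R - 1 +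
   ((s3 ^+ 2 - 3%:R) * 'i ^+ 2 + 3%:R * ('i ^+ 2 + 1)) / 4%:R.
  field; by rewrite ?two_neq0 ?pnatr_eq0.
by rewrite E s3sq sqrCi !subrr addNr mulr0 mul0r addr0 mul0r addr0.
Qed.

Definition ev4 (v : int * int * int * int) : algC :=
  let: (p, q, r, t) := v in
  p%:~R + q%:~R * zeta12 + r%:~R * zeta12 ^+ 2 + t%:~R * zeta12 ^+ 3.

Lemma Z12_rep x : inZ12 x -> exists v, x = ev4 v.
Proof.
have h : zeta12 ^+ 4 - zeta12 ^+ 2 + 1 = 0 by rewrite zeta4; ring.
elim=> {x}.
- by exists (1, 0, 0, 0); rewrite /ev4; ring.
- by exists (0, 1, 0, 0); rewrite /ev4; ring.
- move=> x y _ [[[[p q] r] t] ->] _ [[[[p' q'] r'] t'] ->].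
  by exists (p + p', q + q', r + r', t + t'); rewrite /ev4; ring.
- move=> x _ [[[[p q] r] t] ->].
  by exists (- p, - q, - r, - t); rewrite /ev4; ring.
- move=> x y _ [[[[p q] r] t] ->] _ [[[[p' q'] r'] t'] ->].
  pose c0 := p * p'. pose c1 := p * q' + q * p'. pose c2 := p * r' + q * q' + r * p'.
  pose c3 := p * t' + q * r' + r * q' + t * p'. pose c4 := q * t' + r * r' + t * q'.
  pose c5 := r * t' + t * r'. pose c6 := t * t'.
  exists (c0 - c4 - c6, c1 - c5, c2 + c4, c3 + c5); rewrite /ev4.
  transitivity (((c0 - c4 - c6)%:~R + (c1 - c5)%:~R * zeta12 + (c2 + c4)%:~R * zeta12 ^+ 2
     + (c3 + c5)%:~R * zeta12 ^+ 3) + (c4%:~R + c5%:~R * zeta12 + c6%:~R * (zeta12 ^+ 2 + 1)) *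
     (zeta12 ^+ 4 - zeta12 ^+ 2 + 1)).
    rewrite /c0 /c1 /c2 /c3 /c4 /c5 /c6; ring.
  by rewrite h mulr0 addr0.
Qed.


Definition Nf (v : int * int * int * int) : int :=
  let: (p, q, r, t) := v in p * p + p * r + r * r + q * q + q * t + t * t.
Definition Mf (v : int * int * int * int) : int :=
  let: (p, q, r, t) := v in p * q + q * r + r * t.

Lemma s3_real : s3 \is Num.real.
Proof. by apply: ger0_real; rewrite sqrtC_ge0 ler0n. Qed.

Lemma norm_ev4 v : `|ev4 v| ^+ 2 = (Nf v)%:~R + (Mf v)%:~R * s3.
Proof.
case: v => [[[p q] r] t]; rewrite /ev4 /Nf /Mf.
pose a := ((2 * p + r)%:~R + q%:~R * s3) / 2%:R.
pose b := ((q + 2 * t)%:~R + r%:~R * s3) / 2%:R.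
have -> : p%:~R + q%:~R * zeta12 + r%:~R * zeta12 ^+ 2 + t%:~R * zeta12 ^+ 3 = a + 'i * b.
  rewrite zeta2 zeta3 /zeta12 /a /b; field; by rewrite ?two_neq0 ?pnatr_eq0.
have rR : forall x y : int, ((x%:~R + y%:~R * s3) / 2%:R : algC) \is Num.real.
  move=> x y; apply: rpredM; last by rewrite rpredV realn.
  apply: rpredD; first by rewrite Rreal_int.
  by apply: rpredM; [rewrite Rreal_int | exact: s3_real].
have ra : a \is Num.real by apply: rR.
have rb : b \is Num.real by apply: rR.
rewrite normC2_rect //.
have E : a ^+ 2 + b ^+ 2 = (p * p + p * r + r * r + q * q + q * t + t * t)%:~R +
   (p * q + q * r + r * t)%:~R * s3 + (q%:~R ^+ 2 + r%:~R ^+ 2) * (s3 ^+ 2 - 3%:R) / 4%:R.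
  rewrite /a /b; field; by rewrite ?two_neq0 ?pnatr_eq0.
by rewrite E s3sq subrr mulr0 mul0r addr0.
Qed.

Lemma nat_irr (a b : nat) : (a ^ 2 = 3 * b ^ 2)%N -> b = 0%N.
Proof.
move=> h; case: (posnP b) => // bp.
have := congr1 (logn 3) h.
rewrite lognM ?expn_gt0 ?bp // !lognX (@logn_prime 3 3 isT) eqxx /=.
lia.
Qed.

Lemma irr3 (A B : int) : A%:~R + B%:~R * s3 = 0 -> A = 0.
Proof.
move=> h.
have hA : (A%:~R : algC) = - (B%:~R * s3) by apply/eqP; rewrite -subr_eq0 opprK h.
have hsq : ((A ^+ 2)%:~R : algC) = (3 * B ^+ 2)%:~R.
  transitivity ((A%:~R : algC) ^+ 2); first by ring.
  rewrite hA sqrrN exprMn s3sq; ring.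
move/intr_inj: hsq => /(congr1 absz); rewrite abszX abszM abszX /= => /nat_irr.
move/eqP; rewrite absz_eq0 => /eqP B0.
apply: (intr_inj (R := algC)); rewrite hA B0; ring.
Qed.

Definition mulz (v : int * int * int * int) : int * int * int * int :=
  let: (p, q, r, t) := v in (- t, p, q + t, r).

Lemma ev_mulz v : zeta12 * ev4 v = ev4 (mulz v).
Proof.
case: v => [[[p q] r] t]; rewrite /ev4 /mulz.
have -> : zeta12 * (p%:~R + q%:~R * zeta12 + r%:~R * zeta12 ^+ 2 + t%:~R * zeta12 ^+ 3)
  = p%:~R * zeta12 + q%:~R * zeta12 ^+ 2 + r%:~R * zeta12 ^+ 3 + t%:~R * zeta12 ^+ 4 by ring.
rewrite zeta4; ring.
Qed.

Lemma ev_iter n v : zeta12 ^+ n * ev4 v = ev4 (iter n mulz v).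
Proof.
elim: n v => [|n IH] v; first by rewrite expr0 mul1r.
by rewrite exprSr -mulrA ev_mulz IH iterSr.
Qed.

Lemma unit_case v : Nf v = 1 -> exists n, zeta12 ^+ n * ev4 v = 1.
Proof.
move=> hN.
suff : has (fun n => iter n mulz v == (1, 0, 0, 0)) (iota 0 12).
  case/hasP => n _ /eqP e; exists n; rewrite ev_iter e /ev4; ring.
move: hN; case: v => [[[p q] r] t] /= hN.
have f1 : 0 <= p * p + p * r + r * r by nia.
have f2 : 0 <= q * q + q * t + t * t by nia.
have g1 : (2 * p + r) * (2 * p + r) + 3 * (r * r) <= 4 by nia.
have g2 : (2 * t + q) * (2 * t + q) + 3 * (q * q) <= 4 by nia.
have br : -1 <= r <= 1 by nia.
have bq : -1 <= q <= 1 by nia.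
have bp : -1 <= p <= 1 by nia.
have bt : -1 <= t <= 1 by nia.
have hp : [|| p == -1, p == 0 | p == 1] by lia.
have hq : [|| q == -1, q == 0 | q == 1] by lia.
have hr : [|| r == -1, r == 0 | r == 1] by lia.
have ht : [|| t == -1, t == 0 | t == 1] by lia.
move/eqP: hN; apply/implyP.
by case/or3P: hp => /eqP ->; case/or3P: hq => /eqP ->; case/or3P: hr => /eqP ->;
  case/or3P: ht => /eqP ->.
Qed.


Lemma onelevel_delta m (z : algC) (k : 'I_m) :
  onelevel z k *m (delta_mx k (0 : 'I_1) : 'cV[algC]_m) = z *: (delta_mx k (0 : 'I_1) : 'cV[algC]_m).
Proof.
rewrite -colE; apply/matrixP => a b; rewrite ord1 !mxE eqxx andbT.
by case: eqP; rewrite ?mulr1 ?mulr0.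
Qed.

Lemma swap_l m (j j' : 'I_m) : (j < j')%N ->
  twolevel Xmx j j' *m (delta_mx j (0 : 'I_1) : 'cV[algC]_m) = (delta_mx j' (0 : 'I_1) : 'cV[algC]_m).
Proof.
move=> hjj; have ne : j != j' by rewrite neq_ltn hjj.
rewrite -colE; apply/matrixP => a b; rewrite ord1 !mxE !eqxx /= !andbT.
case: (eqVneq a j) => [->|aj] /=; first by rewrite (negbTE ne).
by case: (a == j').
Qed.

Lemma swap_r m (j j' : 'I_m) : (j < j')%N ->
  twolevel Xmx j j' *m (delta_mx j' (0 : 'I_1) : 'cV[algC]_m) = (delta_mx j (0 : 'I_1) : 'cV[algC]_m).
Proof.
move=> hjj; have ne : j != j' by rewrite neq_ltn hjj.
rewrite -colE; apply/matrixP => a b; rewrite ord1 !mxE !eqxx /= !andbT.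
rewrite eq_sym in ne; rewrite (negbTE ne) !andbF.
by case: (a == j); case: (a == j').
Qed.

Lemma apply_nseq m (k : 'I_m) n (c : algC) :
  apply_seq (nseq n (onelevel zeta12 k)) (c *: (delta_mx k (0 : 'I_1) : 'cV[algC]_m)) = (zeta12 ^+ n * c) *: (delta_mx k (0 : 'I_1) : 'cV[algC]_m).
Proof.
elim: n => [|n IH]; first by rewrite /= expr0 mul1r.
rewrite /apply_seq /= -/(apply_seq _ _) IH -scalemxAr onelevel_delta scalerA.
by rewrite exprSr mulrAC.
Qed.


Lemma form_ge0 (p r : int) : 0 <= p * p + p * r + r * r.
Proof.
have h1 : 0 <= (2 * p + r) * (2 * p + r) by rewrite -expr2 sqr_ge0.
have h2 : 0 <= r * r by rewrite -expr2 sqr_ge0.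
nia.
Qed.

Lemma Nge0 v : 0 <= Nf v.
Proof.
case: v => [[[p q] r] t]; rewrite /Nf.
have := form_ge0 p r; have := form_ge0 q t; lia.
Qed.

Lemma Nz v : Nf v = 0 -> ev4 v = 0.
Proof.
case: v => [[[p q] r] t]; rewrite /Nf /ev4 => h.
have f1 := form_ge0 p r.
have f2 := form_ge0 q t.
have e1 : p * p + p * r + r * r = 0 by lia.
have e2 : q * q + q * t + t * t = 0 by lia.
have hp : p = 0 by nia.
have hr : r = 0 by nia.
have hq : q = 0 by nia.
have ht : t = 0 by nia.
rewrite hp hq hr ht; ring.
Qed.

Lemma gates_nseq m n (k : 'I_m) G : G \in nseq n (onelevel zeta12 k) -> allowed_gate G.
Proof. by rewrite mem_nseq => /andP [_ /eqP ->]; left; exists k. Qed.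

Theorem lemma7p2 (m : nat) (u : 'cV[algC]_m) :
  (forall i, inR12 (u i 0)) -> unit_vector u -> is_lde u 0 ->
  forall j : 'I_m, exists s : seq 'M[algC]_m,
    (forall G, G \in s -> allowed_gate G) /\ apply_seq s u = delta_mx j 0.
Proof.
move=> _ hunit [hZ _] j.
have hrep : forall i, exists v, u i 0 = ev4 v.
  by move=> i; apply: Z12_rep; have := hZ i; rewrite expr0 mul1r.
have [f hf] := fin_all_exists hrep.
have hsum : (\sum_i Nf (f i))%:~R + (\sum_i Mf (f i))%:~R * s3 = 1 :> algC.
  move: hunit; rewrite /unit_vector.
  under eq_bigr do rewrite hf norm_ev4.
  by rewrite big_split /= -mulr_suml -!rmorph_sum.
have hN1 : \sum_i Nf (f i) = 1.
  apply/eqP; rewrite -subr_eq0; apply/eqP; apply: (@irr3 _ (\sum_i Mf (f i))).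
  by rewrite rmorphB /= rmorph1 addrAC hsum subrr.
have [k hk] : exists k, Nf (f k) != 0.
  case: (pickP (fun k => Nf (f k) != 0)) => [k hk|h0]; first by exists k.
  move: hN1; rewrite big1 // => i _; by move/negbFE/eqP: (h0 i).
rewrite (bigD1 k) //= in hN1.
move: hN1; set bb := (X in _ + X = _) => hN1.
have hrest0 : 0 <= bb by apply: sumr_ge0 => i _; apply: Nge0.
have hk0 := Nge0 (f k).
have hk' : Nf (f k) <> 0 by apply/eqP.
have hk1 : Nf (f k) = 1 by lia.
have hrest : bb = 0 by lia.
have hz : forall i, i != k -> u i 0 = 0.
  move=> i ik; rewrite hf; apply: Nz; apply: (psumr_eq0P _ hrest) => // l _; exact: Nge0.
have hu : u = u k 0 *: delta_mx k 0.
  apply/matrixP => a b; rewrite ord1 !mxE eqxx andbT.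
  case: (eqVneq a k) => [->|ak]; first by rewrite mulr1.
  by rewrite mulr0; apply: hz.
have [n hn] := unit_case (f k) hk1.
pose s0 := nseq n (onelevel zeta12 k).
have h0 : apply_seq s0 u = delta_mx k 0.
  by rewrite {1}hu /s0 apply_nseq hf hn scale1r.
case: (ltngtP k j) => hkj.
- exists (twolevel Xmx k j :: s0); split.
    move=> G; rewrite inE => /orP [/eqP ->|]; last exact: gates_nseq.
    by right; exists k, j; split => //; left.
  by rewrite /= -/(apply_seq s0 u) h0 swap_l.
- exists (twolevel Xmx j k :: s0); split.
    move=> G; rewrite inE => /orP [/eqP ->|]; last exact: gates_nseq.
    by right; exists j, k; split => //; left.
  by rewrite /= -/(apply_seq s0 u) h0 swap_r.
- exists s0; split; first exact: gates_nseq.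
  by rewrite h0; congr delta_mx; apply: val_inj.
Qed.
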